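(* Let $d\in\mathbb{N}$, $G=\mathbb{Z}_{12d+4}$, $H=\{0,3d+1,6d+2,9d+3\}$ and $K=\{0,6d+2\}$. Let $a_1+H,\dots,a_{3d}+H$ be the cosets of $H$ in $G$ other than $H$ itself. Form a family $S'$ of $6d$ two-element sets as follows: for each $1\le i\le d$, split $a_i+H$ into the two cosets $a_i+K$ and $b_i+K$ of $K$, where $b_i=a_i+(3d+1)$; for each $d+1\le j\le 3d$, split $a_j+H$ into two disjoint subsets $B_j$ and $C_j$, each of the form $\{x,y\}$ with $y-x=3d+1$. Then $S'$ is a $(12d+4,6d,2,0,4d)$-DPDF and a $(12d+4,6d,2,12d-4,8d)$-EPDF in $G$.
   Context: In an additive group $G$ with identity $0$, let $G^*=G\setminus\{0\}$. For $D\subseteq G$, $\Delta(D)$ is the multiset $\{x-y:x,y\in D,x\ne y\}$; for $D_1,D_2\subseteq G$, $\Delta(D_1,D_2)$ is the multiset $\{x-y:x\in D_1,y\in D_2\}$. For a family $A=\{A_1,\dots,A_s\}$ of pairwise disjoint subsets, ${\rm Int}(A)=\bigcup_i\Delta(A_i)$ and ${\rm Ext}(A)=\bigcup_{i\ne j}\Delta(A_i,A_j)$ (multiset unions). For $|G|=v$, a $(v,s,k,\lambda,\mu)$-DPDF is a family of $s$ pairwise disjoint $k$-subsets of $G^*$ with union $S$ such that ${\rm Int}(A)$ contains each element of $S$ exactly $\lambda$ times and each element of $G\setminus(S\cup\{0\})$ exactly $\mu$ times; a $(v,s,k,\lambda,\mu)$-EPDF is defined the same way using ${\rm Ext}(A)$.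 *)

(* Defs.v *)
From HB Require Import structures.
From mathcomp Require Import all_boot all_order all_algebra.
Set Implicit Arguments. Unset Strict Implicit. Unset Printing Implicit Defensive.
Import GRing.Theory.
Local Open Scope ring_scope.

(* A family A = {A_1,...,A_s} of subsets of a finite additive group G is
   represented as a sequence of sets (A_i = nth set0 A i). *)

Section PDF.
Variable G : finZmodType.

Definition coset (a : G) (H : {set G}) : {set G} := [set a + h | h in H].

Definition fam_union (A : seq {set G}) : {set G} := \bigcup_(X <- A) X.

Definition mult_Delta (X : {set G}) (g : G) : nat :=
  #|[set p in setX X X | (p.1 != p.2) && (p.1 - p.2 == g)]|.

Definition mult_Delta2 (X Y : {set G}) (g : G) : nat :=
  #|[set p in setX X Y | p.1 - p.2 == g]|.

Definition mult_Int (A : seq {set G}) (g : G) : nat :=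
  (\sum_(X <- A) mult_Delta X g)%N.

Definition mult_Ext (A : seq {set G}) (g : G) : nat :=
  (\sum_(i < size A) \sum_(j < size A | i != j)
      mult_Delta2 (nth set0 A i) (nth set0 A j) g)%N.

Definition is_PF (v s k : nat) (A : seq {set G}) : Prop :=
  [/\ #|G| = v, size A = s,
      (forall i, (i < s)%N -> #|nth set0 A i| = k /\ 0 \notin nth set0 A i) &
      (forall i j, (i < s)%N -> (j < s)%N -> i != j ->
          [disjoint nth set0 A i & nth set0 A j])].

Definition is_DPDF (v s k lam mu : nat) (A : seq {set G}) : Prop :=
  [/\ is_PF v s k A,
      (forall g, g \in fam_union A -> mult_Int A g = lam) &
      (forall g, g != 0 -> g \notin fam_union A -> mult_Int A g = mu)].

Definition is_EPDF (v s k lam mu : nat) (A : seq {set G}) : Prop :=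
  [/\ is_PF v s k A,
      (forall g, g \in fam_union A -> mult_Ext A g = lam) &
      (forall g, g != 0 -> g \notin fam_union A -> mult_Ext A g = mu)].

End PDF.

(* Main.v *)
Require Import Defs.
From HB Require Import structures.
From mathcomp Require Import all_boot all_order all_algebra zify.
Set Implicit Arguments. Unset Strict Implicit. Unset Printing Implicit Defensive.
Import GRing.Theory.
Local Open Scope ring_scope.

Definition Hs (G : finZmodType) (t : G) : {set G} := [set 0; t; t *+ 2; t *+ 3].

Lemma t3nz (G : finZmodType) (t : G) : t *+ 4 = 0 -> t != 0 -> t *+ 3 != 0.
Proof.
move=> t4 t1; by rewrite -(inj_eq (addrI t)) addr0 -mulrS t4 eq_sym.
Qed.

Lemma tk0 (G : finZmodType) (t : G) k : t *+ 4 = 0 -> t != 0 -> t *+ 2 != 0 ->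
  (k < 4)%N -> (t *+ k == 0) = (k == 0%N).
Proof.
move=> t4 t1 t2 hk; case: k hk => [|[|[|[|k]]]] hk.
by rewrite mulr0n !eqxx.
by rewrite mulr1n (negbTE t1).
by rewrite (negbTE t2).
by rewrite (negbTE (t3nz t4 t1)).
by [].
Qed.

Lemma eq_tk (G : finZmodType) (t : G) i j : t *+ 4 = 0 -> t != 0 -> t *+ 2 != 0 ->
  (i < 4)%N -> (j < 4)%N -> (t *+ i == t *+ j) = (i == j).
Proof.
move=> t4 t1 t2.
wlog ij : i j / (i <= j)%N.
  move=> W hi hj; case: (leqP i j) => [/W|/ltnW/W]; first exact.
  by rewrite eq_sym (eq_sym i); apply.
move=> hi hj; rewrite -(subnKC ij) mulrnDr -{1}(addr0 (t *+ i)) (inj_eq (addrI _)).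
rewrite eq_sym tk0 //; last by apply: leq_ltn_trans hj; apply: leq_subr.
by rewrite -{2}(addn0 i) eqn_add2l.
Qed.

Lemma eq_atk (G : finZmodType) (t a : G) i j : t *+ 4 = 0 -> t != 0 -> t *+ 2 != 0 ->
  (i < 4)%N -> (j < 4)%N -> (a + t *+ i == a + t *+ j) = (i == j).
Proof. by move=> *; rewrite (inj_eq (addrI _)) eq_tk. Qed.

Lemma tk_H (G : finZmodType) (t : G) k : t *+ 4 = 0 -> t *+ k \in Hs t.
Proof.
move=> t4; rewrite (divn_eq k 4) mulrnDr mulnC mulrnA t4 mul0rn add0r.
have : (k %% 4 < 4)%N by rewrite ltn_mod.
rewrite /Hs; case: (k %% 4)%N => [|[|[|[|]]]] //= _; rewrite !inE ?mulr1n ?eqxx ?orbT //.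
Qed.

Lemma H_tk (G : finZmodType) (t : G) y : y \in Hs t -> exists k, y = t *+ k.
Proof.
rewrite !inE; case/orP => [/orP[/orP[/eqP->|/eqP->]|/eqP->]|/eqP->];
  [exists 0%N|exists 1%N|exists 2%N|exists 3%N] => //.
Qed.

Lemma HD (G : finZmodType) (t : G) x y : t *+ 4 = 0 ->
  x \in Hs t -> y \in Hs t -> x + y \in Hs t.
Proof.
move=> t4 /H_tk [k ->] /H_tk [l ->]; by rewrite -mulrnDr tk_H.
Qed.

Lemma HN (G : finZmodType) (t : G) x : t *+ 4 = 0 -> x \in Hs t -> - x \in Hs t.
Proof.
move=> t4 /H_tk [k ->]; rewrite -mulNrn.
have -> : - t = t *+ 3 by apply/eqP; rewrite eq_sym -subr_eq0 opprK -mulrSr t4.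
by rewrite -mulrnA tk_H.
Qed.

Lemma HB (G : finZmodType) (t : G) x y : t *+ 4 = 0 ->
  x \in Hs t -> y \in Hs t -> x - y \in Hs t.
Proof. by move=> t4 hx hy; rewrite HD // HN. Qed.

Lemma H0 (G : finZmodType) (t : G) : 0 \in Hs t.
Proof. by rewrite !inE eqxx. Qed.

Lemma mem_coset (G : finZmodType) (H : {set G}) x y : (y \in coset x H) = (y - x \in H).
Proof.
apply/imsetP/idP => [[h hH ->]|hy]; first by rewrite (addrC x) addrK.
by exists (y - x) => //; rewrite addrC subrK.
Qed.

Lemma coset_eq (G : finZmodType) (t : G) x y : t *+ 4 = 0 ->
  (coset x (Hs t) == coset y (Hs t)) = (x - y \in Hs t).
Proof.
move=> t4; apply/eqP/idP => [e|h].
  by rewrite -mem_coset -e mem_coset subrr H0.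
apply/setP => z; rewrite !mem_coset; apply/idP/idP => hz.
  by have := HD t4 hz h; rewrite addrA subrK.
by have := HB t4 hz h; rewrite opprB addrA subrK.
Qed.

Lemma coset0 (G : finZmodType) (H : {set G}) : coset 0 H = H.
Proof. by apply/setP => z; rewrite mem_coset subr0. Qed.

Lemma card_coset (G : finZmodType) (H : {set G}) x : #|coset x H| = #|H|.
Proof. by rewrite card_imset //; apply: addrI. Qed.

Lemma cardH (G : finZmodType) (t : G) : t *+ 4 = 0 -> t != 0 -> t *+ 2 != 0 ->
  #|Hs t| = 4%N.
Proof.
move=> t4 t1 t2.
have E := eq_tk t4 t1 t2.
have -> : Hs t = 0 |: (t |: [set t *+ 2; t *+ 3]) by apply/setP => z; rewrite !inE !orbA.
rewrite !cardsU1 cards1 !inE.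
have := E 0%N 1%N; have := E 0%N 2%N; have := E 0%N 3%N; have := E 1%N 2%N;
have := E 1%N 3%N; have := E 2%N 3%N.
rewrite mulr0n mulr1n => -> // -> // -> // -> // -> // -> //.
Qed.
Definition cnt (G : finZmodType) (X Y : {set G}) (g : G) : nat :=
  (\sum_y (nat_of_bool (y \in X) * nat_of_bool ((y - g)%R \in Y)))%N.

Definition ind (G : finZmodType) (A : seq {set G}) (y : G) : nat :=
  (\sum_(i < size A) nat_of_bool (y \in nth set0 A i))%N.

Lemma sum_mem (G : finType) (A : {pred G}) : (\sum_y nat_of_bool (y \in A))%N = #|A|.
Proof.
by rewrite -sum1_card [in RHS]big_mkcond; apply: eq_bigr => y _; case: (y \in A).
Qed.

Lemma Delta2_cnt (G : finZmodType) (X Y : {set G}) g : mult_Delta2 X Y g = cnt X Y g.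
Proof.
rewrite /mult_Delta2 /cnt.
have -> : [set p in setX X Y | p.1 - p.2 == g] =
          (fun y => (y, y - g)) @: [set y in X | y - g \in Y].
  apply/setP => -[u v]; rewrite !inE /=; apply/idP/imsetP.
    case/andP => /andP [uX vY] /eqP e; exists u; first by rewrite inE uX -e opprB addrC subrK.
    by rewrite -e opprB addrC subrK.
  by case=> y; rewrite inE => /andP [yX yY] [-> ->]; rewrite yX yY opprB addrC subrK eqxx.
rewrite card_imset; last by move=> y z [].
rewrite -sum_mem; apply: eq_bigr => y _; by rewrite inE mulnb.
Qed.

Lemma Delta_cnt (G : finZmodType) (X : {set G}) g : g != 0 -> mult_Delta X g = cnt X X g.
Proof.
move=> gnz; rewrite -Delta2_cnt /mult_Delta /mult_Delta2.
apply: eq_card => p; rewrite !inE.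
case: (p.1 =P p.2) => [e|_] //=.
by rewrite e subrr eq_sym (negbTE gnz) andbF.
Qed.

Lemma cnt2 (G : finZmodType) (x s g : G) : s != 0 -> g != 0 ->
  cnt [set x; x + s] [set x; x + s] g = ((g == s) + (g == - s))%N.
Proof.
move=> snz gnz; rewrite /cnt.
rewrite (eq_bigr (fun y => if y \in [set x; x + s] then nat_of_bool ((y - g)%R \in [set x; x + s]) else 0%N));
  last by move=> y _; case: (y \in _); rewrite ?mul1n ?mul0n.
rewrite -big_mkcond /= big_setU1 /=; last first.
  by rewrite inE -{1}(addr0 x) (inj_eq (addrI _)) eq_sym.
rewrite big_set1 !inE.
have e1 : (x - g == x) = false by rewrite -{2}(addr0 x) (inj_eq (addrI x)) oppr_eq0 (negbTE gnz).
have e2 : (x - g == x + s) = (g == - s) by rewrite (inj_eq (addrI x)) eqr_oppLR.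
have e3 : (x + s - g == x) = (g == s).
  by rewrite -addrA -{2}(addr0 x) (inj_eq (addrI x)) subr_eq0 eq_sym.
have e4 : (x + s - g == x + s) = false.
  by rewrite -addrA (inj_eq (addrI x)) -{2}(addr0 s) (inj_eq (addrI s)) oppr_eq0 (negbTE gnz).
by rewrite e1 e2 e3 e4 orbF addnC.
Qed.

Lemma ext_int (G : finZmodType) (A : seq {set G}) g : g != 0 ->
  (mult_Ext A g + mult_Int A g = \sum_y ind A y * ind A (y - g)%R)%N.
Proof.
move=> gnz.
have hI : mult_Int A g = (\sum_(i < size A) cnt (nth set0 A i) (nth set0 A i) g)%N.
  rewrite /mult_Int (big_nth set0) big_mkord; apply: eq_bigr => i _; exact: Delta_cnt.
rewrite hI /mult_Ext -big_split /=.
transitivity (\sum_(i < size A) \sum_(j < size A) cnt (nth set0 A i) (nth set0 A j) g)%N.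
  apply: eq_bigr => i _; rewrite [in RHS](bigD1 i) //= addnC; congr (_ + _)%N.
  apply: eq_big => [j|j _]; [by rewrite eq_sym | exact: Delta2_cnt].
rewrite /cnt /ind; symmetry.
rewrite (eq_bigr (fun y => \sum_(i < size A) \sum_(j < size A)
   (nat_of_bool (y \in nth set0 A i) * nat_of_bool ((y - g)%R \in nth set0 A j)))%N); last first.
  move=> y _; rewrite big_distrl /=; apply: eq_bigr => i _; by rewrite big_distrr.
rewrite exchange_big; apply: eq_bigr => i _; by rewrite exchange_big.
Qed.

Lemma mem_fam (G : finZmodType) (A : seq {set G}) y :
  (y \in fam_union A) = (0 < \sum_(X <- A) nat_of_bool (y \in X))%N.
Proof.
rewrite /fam_union; elim: A => [|X A IH]; first by rewrite !big_nil inE.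
by rewrite !big_cons in_setU IH addn_gt0 lt0b.
Qed.

Lemma ind_seq (G : finZmodType) (A : seq {set G}) y :
  ind A y = (\sum_(X <- A) nat_of_bool (y \in X))%N.
Proof. by rewrite /ind (big_nth set0) big_mkord. Qed.

Lemma coset_mem_eq (G : finZmodType) (t : G) x y : t *+ 4 = 0 ->
  y \in coset x (Hs t) -> coset x (Hs t) = coset y (Hs t).
Proof. by move=> t4; rewrite mem_coset -coset_eq // => /eqP. Qed.

Lemma cosetH (G : finZmodType) (t : G) y : t *+ 4 = 0 -> y \in Hs t -> coset y (Hs t) = Hs t.
Proof. by move=> t4 yH; rewrite -{2}(coset0 (Hs t)); apply/eqP; rewrite coset_eq // subr0. Qed.

Lemma part (G : finZmodType) (t : G) n (a : 'I_n -> G) :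
  t *+ 4 = 0 -> t != 0 -> t *+ 2 != 0 -> #|G| = (4 * n.+1)%N ->
  (forall i, coset (a i) (Hs t) != Hs t) -> injective (fun i => coset (a i) (Hs t)) ->
  forall y, (\sum_(i < n) nat_of_bool (y \in coset (a i) (Hs t)))%N = nat_of_bool (y \notin Hs t).
Proof.
move=> t4 t1 t2 cG haH hinj.
pose f y := (\sum_(i < n) nat_of_bool (y \in coset (a i) (Hs t)))%N.
have le : forall y, (f y <= nat_of_bool (y \notin Hs t))%N.
  move=> y; case: (pickP (fun i => y \in coset (a i) (Hs t))) => [i0 hi0|none].
    rewrite /f (bigD1 i0) //= hi0 big1 ?addn0.
      case: (boolP (y \in Hs t)) => // yH.
      by move: (haH i0); rewrite (coset_mem_eq t4 hi0) (cosetH t4 yH) eqxx.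
    move=> j ji0; apply/eqP; rewrite eqb0; apply: contra ji0 => hj.
    by apply/eqP; apply: hinj => /=; rewrite (coset_mem_eq t4 hj) (coset_mem_eq t4 hi0).
  by rewrite /f big1 // => i _; rewrite none.
have sum_f : (\sum_y f y = 4 * n)%N.
  rewrite /f exchange_big /=.
  rewrite (eq_bigr (fun _ => 4%N)); last by move=> i _; rewrite sum_mem card_coset cardH.
  by rewrite sum_nat_const card_ord mulnC.
have sum_g : (\sum_y nat_of_bool (y \notin Hs t) = 4 * n)%N.
  rewrite (eq_bigr (fun y => nat_of_bool (y \in ~: Hs t))); last by move=> y _; rewrite in_setC.
  rewrite sum_mem; have := cardsC (Hs t); rewrite cardH // cG => e.
  by apply/eqP; rewrite -(eqn_add2l 4) e mulnS.
have h0 : (\sum_y (nat_of_bool (y \notin Hs t) - f y) = 0)%N.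
  by rewrite sumnB; [rewrite sum_f sum_g subnn | move=> y _; exact: le].
move=> y; apply/eqP; rewrite eqn_leq le /=.
move/eqP: h0; rewrite sum_nat_eq0 => /forallP /(_ y) /=.
by rewrite subn_eq0.
Qed.
Lemma sumP d (c : nat) : (\sum_(i <- enum 'I_(3 * d) | (i < d)%N) c = d * c)%N.
Proof.
rewrite big_enum_cond /=.
rewrite (eq_bigl (fun i : 'I_(3*d) => (i < d)%N)) //.
rewrite -(big_ord_widen _ (fun _ => c)); last lia.
by rewrite sum_nat_const card_ord.
Qed.
Lemma sumQ d (c : nat) : (\sum_(i <- enum 'I_(3 * d) | (d <= i)%N) c = (2 * d) * c)%N.
Proof.
have := sumP d c; rewrite !big_enum_cond /=.
rewrite [X in (X = _)%N -> _](eq_bigl (fun i : 'I_(3*d) => (i < d)%N)) // => hP.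
rewrite (eq_bigl (fun i : 'I_(3*d) => ~~ (i < d)%N)); last by move=> i; rewrite /= leqNgt.
have hT : (\sum_(i < 3*d) c = \sum_(i < 3*d | (i < d)%N) c + \sum_(i < 3*d | ~~ (i < d)%N) c)%N.
  by rewrite [LHS](bigID (fun i : 'I_(3*d) => (i < d)%N)).
rewrite (eq_bigl (fun i : 'I_(3*d) => (i < d)%N)) // in hP.
move: hT; rewrite hP sum_nat_const card_ord.
rewrite -!mulnA => hT; move: (d * c)%N hT => x; set s := (\sum_(i < 3 * d | _) c)%N; clearbody s => hT; lia.
Qed.

Lemma split_mem (G : finType) (P Q R : {set G}) y : [disjoint P & Q] -> P :|: Q = R ->
  (nat_of_bool (y \in P) + nat_of_bool (y \in Q) = nat_of_bool (y \in R))%N.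
Proof.
move=> dPQ <-; rewrite in_setU; move: dPQ; rewrite -setI_eq0 => /eqP /setP /(_ y).
by rewrite !inE; case: (y \in P); case: (y \in Q).
Qed.

Lemma cosetK2 (G : finZmodType) (a s : G) : coset a [set 0; s] = [set a; a + s].
Proof. by rewrite /coset imsetU1 imset_set1 addr0. Qed.

Lemma subD_eq (G : finZmodType) (y a t u : G) : (y - (a + t) == u) = (y - a == u + t).
Proof. by rewrite opprD addrA subr_eq. Qed.

Lemma K_union (G : finZmodType) (t a : G) :
  coset a [set 0; t *+ 2] :|: coset (a + t) [set 0; t *+ 2] = coset a (Hs t).
Proof.
apply/setP => y; rewrite in_setU !mem_coset !inE !subD_eq add0r -mulrSr.
by case: (y - a == 0); case: (y - a == t); case: (y - a == t *+ 2); case: (y - a == t *+ 3).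
Qed.

Lemma K_disj (G : finZmodType) (t a : G) : t *+ 4 = 0 -> t != 0 -> t *+ 2 != 0 ->
  [disjoint coset a [set 0; t *+ 2] & coset (a + t) [set 0; t *+ 2]].
Proof.
move=> t4 t1 t2; have E := eq_tk t4 t1 t2.
rewrite -setI_eq0; apply/eqP/setP => y; rewrite !inE !mem_coset !inE !subD_eq add0r -mulrSr.
have := E 0%N 1%N; have := E 0%N 3%N; have := E 2%N 1%N; have := E 2%N 3%N.
rewrite mulr0n mulr1n => n23 n21 n03 n01.
case: (y - a =P 0) => [->|_] /=; first by rewrite n01 ?n03.
by case: (y - a =P t *+ 2) => [->|_] //=; rewrite n21 ?n23.
Qed.

Lemma mem_sum_pos (G : finZmodType) (A : seq {set G}) X y : X \in A -> y \in X ->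
  (0 < \sum_(Z <- A) nat_of_bool (y \in Z))%N.
Proof.
elim: A => [|Z A IH] //; rewrite inE big_cons => /orP [/eqP -> -> //| hX hy].
by rewrite addn_gt0 IH ?orbT.
Qed.

Lemma big_enum_ord n (P : pred 'I_n) (F : 'I_n -> nat) :
  (\sum_(i <- enum 'I_n | P i) F i = \sum_(i < n | P i) F i)%N.
Proof. by rewrite big_enum_cond; apply: eq_bigl => i. Qed.

Lemma sumP' d (c : nat) : (\sum_(i < 3 * d | (i < d)%N) c = d * c)%N.
Proof. by rewrite -big_enum_ord sumP. Qed.

Lemma sumQ' d (c : nat) : (\sum_(i < 3 * d | (d <= i)%N) c = (2 * d) * c)%N.
Proof. by rewrite -big_enum_ord sumQ. Qed.

Lemma main_gen (G : finZmodType) (t : G) (d : nat) (a : 'I_(3 * d) -> G)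
  (B C : 'I_(3 * d) -> {set G}) :
  t *+ 4 = 0 -> t != 0 -> t *+ 2 != 0 -> #|G| = (12 * d + 4)%N ->
  (forall i, coset (a i) (Hs t) != Hs t) ->
  injective (fun i => coset (a i) (Hs t)) ->
  (forall j : 'I_(3 * d), (d <= j)%N ->
     [/\ B j :|: C j = coset (a j) (Hs t), [disjoint B j & C j],
         exists x, B j = [set x; x + t] &
         exists x, C j = [set x; x + t]]) ->
  let K := [set 0; t *+ 2] in
  let S' := [seq coset (a i) K | i <- filter (fun i : 'I_(3 * d) => (i < d)%N) (enum 'I_(3 * d))]
    ++ [seq coset (a i + t) K | i <- filter (fun i : 'I_(3 * d) => (i < d)%N) (enum 'I_(3 * d))]
    ++ [seq B j | j <- filter (fun j : 'I_(3 * d) => (d <= j)%N) (enum 'I_(3 * d))]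
    ++ [seq C j | j <- filter (fun j : 'I_(3 * d) => (d <= j)%N) (enum 'I_(3 * d))] in
  is_DPDF (12 * d + 4) (6 * d) 2 0 (4 * d) S' /\
  is_EPDF (12 * d + 4) (6 * d) 2 (12 * d - 4) (8 * d) S'.
Proof.
move=> t4 t1 t2 cG haH hinj hBC K S'.
have E := eq_tk t4 t1 t2.
have bigS : forall F : {set G} -> nat, (\sum_(X <- S') F X =
   \sum_(i < 3 * d | (i < d)%N) F (coset (a i) K) + \sum_(i < 3 * d | (i < d)%N) F (coset (a i + t)%R K)
   + \sum_(j < 3 * d | (d <= j)%N) F (B j) + \sum_(j < 3 * d | (d <= j)%N) F (C j))%N.
  by move=> F; rewrite /S' !big_cat !big_map !big_filter !big_enum_ord /= !addnA.
have cntS : forall y, (\sum_(X <- S') nat_of_bool (y \in X) = nat_of_bool (y \notin Hs t))%N.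
  move=> y; rewrite bigS.
  rewrite -(part t4 t1 t2 _ haH hinj y); last by rewrite cG; lia.
  rewrite [RHS](bigID (fun i : 'I_(3*d) => (i < d)%N)) /=.
  rewrite [X in _ = (X + _)%N](eq_bigr (fun i => nat_of_bool (y \in coset (a i) K)
            + nat_of_bool (y \in coset (a i + t)%R K)))%N; last first.
    by move=> i _; rewrite (split_mem _ (K_disj (a i) t4 t1 t2) (K_union t (a i))).
  rewrite [X in _ = (_ + X)%N](eq_bigl (fun i : 'I_(3*d) => (d <= i)%N)); last by move=> i; rewrite ltnNge negbK.
  rewrite [X in _ = (_ + X)%N](eq_bigr (fun i => nat_of_bool (y \in B i)
            + nat_of_bool (y \in C i)))%N; last first.
    by move=> j hj; have [h1 h2 _ _] := hBC j hj; rewrite (split_mem _ h2 h1).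
  by rewrite !big_split /= !addnA.
have sizeS : size S' = (6 * d)%N.
  rewrite /S' !size_cat !size_map !size_filter -!sum1_count !big_enum_ord sumP' sumQ'; lia.
have memS : forall X, X \in S' -> exists x s, X = [set x; x + s] /\ s != 0.
  move=> X; rewrite !mem_cat => /orP [/mapP [i _ ->]|/orP [/mapP [i _ ->]|/orP [/mapP [j hj ->]|/mapP [j hj ->]]]].
  - by exists (a i), (t *+ 2); rewrite cosetK2.
  - by exists (a i + t), (t *+ 2); rewrite cosetK2.
  - rewrite mem_filter in hj; case/andP: hj => hj _; have [_ _ [x ->] _] := hBC j hj.
    by exists x, t.
  - rewrite mem_filter in hj; case/andP: hj => hj _; have [_ _ _ [x ->]] := hBC j hj.
    by exists x, t.
have cardX : forall X, X \in S' -> #|X| = 2%N.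
  move=> X /memS [x [s [-> snz]]].
  by rewrite cards2 -{1}(addr0 x) (inj_eq (addrI x)) eq_sym snz.
have zX : forall X, X \in S' -> 0 \notin X.
  move=> X hX; apply/negP => h0; have := mem_sum_pos hX h0; by rewrite cntS H0.
have PF : is_PF (12 * d + 4) (6 * d) 2 S'.
  split => //.
  - move=> i hi; have hX : nth set0 S' i \in S' by rewrite mem_nth // sizeS.
    by split; [exact: cardX | exact: zX].
  - move=> i j hi hj ij; rewrite -setI_eq0; apply/eqP/setP => y; rewrite !inE.
    apply/negbTE/negP => /andP [yi yj].
    have hi' : (i < size S')%N by rewrite sizeS.
    have hj' : (j < size S')%N by rewrite sizeS.
    have := cntS y; rewrite -ind_seq /ind (bigD1 (Ordinal hi')) //= yi.
    rewrite (bigD1 (Ordinal hj')) /=; last by rewrite -val_eqE /= eq_sym.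
    rewrite yj; set s := (\sum_(k < size S' | _) _)%N; clearbody s.
    by case: (y \notin Hs t) => /=; lia.
have memU : forall y, (y \in fam_union S') = (y \notin Hs t).
  by move=> y; rewrite mem_fam cntS; case: (_ \notin _).
have nt : - t = t *+ 3 by apply/eqP; rewrite eq_sym -subr_eq0 opprK -mulrSr t4.
have n2 : - (t *+ 2) = t *+ 2 by apply/eqP; rewrite eq_sym -subr_eq0 opprK -mulrnDr t4.
have intS : forall g, g != 0 -> mult_Int S' g =
   (d * (nat_of_bool (g == t *+ 2) + nat_of_bool (g == t *+ 2))
  + d * (nat_of_bool (g == t *+ 2) + nat_of_bool (g == t *+ 2))
  + 2 * d * (nat_of_bool (g == t) + nat_of_bool (g == t *+ 3))
  + 2 * d * (nat_of_bool (g == t) + nat_of_bool (g == t *+ 3)))%N.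
  move=> g gnz; rewrite /mult_Int bigS -!(sumQ' d) -!(sumP' d).
  congr (_ + _ + _ + _)%N; apply: eq_bigr.
  - by move=> i _; rewrite Delta_cnt // /K cosetK2 cnt2 // n2.
  - by move=> i _; rewrite Delta_cnt // /K cosetK2 cnt2 // n2.
  - by move=> j hj; have [_ _ [x ->] _] := hBC j hj; rewrite Delta_cnt // cnt2 // nt.
  - by move=> j hj; have [_ _ _ [x ->]] := hBC j hj; rewrite Delta_cnt // cnt2 // nt.
have tH : t \in Hs t by rewrite !inE eqxx !orbT.
have intH0 : forall g, g \notin Hs t -> mult_Int S' g = 0%N.
  move=> g gH; have gnz : g != 0 by apply: contraNneq gH => ->; exact: H0.
  have f : forall h, h \in Hs t -> (g == h) = false.
    by move=> h hH; apply: contraNF gH => /eqP ->.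
  by rewrite intS // !f // ?tk_H // !muln0.
have intH : forall g, g != 0 -> g \in Hs t -> mult_Int S' g = (4 * d)%N.
  move=> g gnz gH; rewrite intS //.
  have := E 1%N 2%N; have := E 1%N 3%N; have := E 2%N 3%N; rewrite mulr1n => n23 n13 n12.
  move: gH; rewrite !inE (negbTE gnz) /=.
  case/orP => [/orP [] |] /eqP ->.
  - rewrite (n12 isT isT) (n13 isT isT) eqxx /=; lia.
  - rewrite eqxx [t *+ 2 == t]eq_sym (n12 isT isT) (n23 isT isT) /=; lia.
  - rewrite eqxx [t *+ 3 == t]eq_sym [t *+ 3 == t *+ 2]eq_sym (n13 isT isT) (n23 isT isT) /=; lia.
have extS : forall g, g != 0 ->
    (mult_Ext S' g + mult_Int S' g = #|~: (Hs t :|: coset g (Hs t))|)%N.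
  move=> g gnz; rewrite ext_int // -sum_mem; apply: eq_bigr => y _.
  by rewrite !ind_seq !cntS in_setC in_setU mem_coset negb_or mulnb.
have cHC := cardsC (Hs t); rewrite cardH // cG in cHC.
split; split => //.
- by move=> g; rewrite memU => gH; apply: intH0.
- by move=> g gnz; rewrite memU negbK => gH; apply: intH.
- move=> g; rewrite memU => gH.
  have gnz : g != 0 by apply: contraNneq gH => ->; exact: H0.
  have := extS g gnz; rewrite intH0 // addn0 => ->.
  have := cardsC (Hs t :|: coset g (Hs t)); rewrite cardsU cardH // card_coset cardH // cG.
  have -> : Hs t :&: coset g (Hs t) = set0.
    apply/setP => y; rewrite in_setI in_set0 mem_coset; apply/negbTE/negP => /andP [yH ygH].
    by move: gH; have := HB t4 yH ygH; rewrite opprB addrC subrK => ->.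
  rewrite cards0; lia.
- move=> g gnz; rewrite memU negbK => gH.
  have := extS g gnz; rewrite intH // cosetH // setUid; lia.
Qed.

Theorem mainTheorem6 (d : nat)
  (a : 'I_(3 * d) -> 'Z_(12 * d + 4))
  (B C : 'I_(3 * d) -> {set 'Z_(12 * d + 4)}) :
  let t : 'Z_(12 * d + 4) := (3 * d + 1)%:R in
  let H : {set 'Z_(12 * d + 4)} :=
    [set 0; (3 * d + 1)%:R; (6 * d + 2)%:R; (9 * d + 3)%:R] in
  let K : {set 'Z_(12 * d + 4)} := [set 0; (6 * d + 2)%:R] in
  (* a_1 + H, ..., a_{3d} + H are the cosets of H other than H, listed once each *)
  (forall i, coset (a i) H != H) ->
  injective (fun i => coset (a i) H) ->
  (* for d+1 <= j <= 3d: a_j + H is split into disjoint B_j, C_j, each {x, x + (3d+1)} *)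
  (forall j : 'I_(3 * d), (d <= j)%N ->
     [/\ B j :|: C j = coset (a j) H, [disjoint B j & C j],
         exists x, B j = [set x; x + t] &
         exists x, C j = [set x; x + t]]) ->
  let S' : seq {set 'Z_(12 * d + 4)} :=
    [seq coset (a i) K | i <- filter (fun i : 'I_(3 * d) => (i < d)%N) (enum 'I_(3 * d))]
    ++ [seq coset (a i + t) K | i <- filter (fun i : 'I_(3 * d) => (i < d)%N) (enum 'I_(3 * d))]
    ++ [seq B j | j <- filter (fun j : 'I_(3 * d) => (d <= j)%N) (enum 'I_(3 * d))]
    ++ [seq C j | j <- filter (fun j : 'I_(3 * d) => (d <= j)%N) (enum 'I_(3 * d))] in
  is_DPDF (12 * d + 4) (6 * d) 2 0 (4 * d) S' /\
  is_EPDF (12 * d + 4) (6 * d) 2 (12 * d - 4) (8 * d) S'.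
Proof.
move=> t H K haH hinj hBC S'.
have p1 : (1 < 12 * d + 4)%N by lia.
have tk : forall k, t *+ k = (((3 * d + 1) * k)%N)%:R by move=> k; rewrite /t -mulrnA.
have nz : forall m, (0 < m < 12 * d + 4)%N -> (m%:R : 'Z_(12 * d + 4)) != 0.
  move=> m hm; apply/eqP => h; have := congr1 val h; rewrite /= val_Zp_nat // modn_small; lia.
have t4 : t *+ 4 = 0.
  rewrite tk; apply: val_inj; rewrite /= val_Zp_nat //.
  have -> : ((3 * d + 1) * 4 = 12 * d + 4)%N by lia.
  by rewrite modnn.
have t1 : t != 0 by rewrite -[t]mulr1n tk nz //; lia.
have t2 : t *+ 2 != 0 by rewrite tk nz //; lia.
have cG : #|'Z_(12 * d + 4)| = (12 * d + 4)%N by rewrite card_ord Zp_cast.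
have e2 : (6 * d + 2)%:R = t *+ 2 :> 'Z_(12 * d + 4) by rewrite tk; congr (_ %:R); lia.
have e3 : (9 * d + 3)%:R = t *+ 3 :> 'Z_(12 * d + 4) by rewrite tk; congr (_ %:R); lia.
have HH : H = Hs t by rewrite /H /Hs e2 e3.
have KK : K = [set 0; t *+ 2] by rewrite /K e2.
rewrite HH in haH hinj hBC.
rewrite /S' KK.
exact: (main_gen t4 t1 t2 cG haH hinj hBC).
Qed.
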